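(* Let $E_1|H_1$, $E_2|H_2$, $E_3|H_3$ be conditional events such that $\{E_1|H_1,E_2|H_2\}$ is p-consistent. Then $\{E_1|H_1,E_2|H_2\}$ p-entails $E_3|H_3$ if and only if $(E_3|H_3)\,|\,\big((E_1|H_1)\wedge(E_2|H_2)\big)=1$. *)

(* Defs.v *)
From HB Require Import structures.
From mathcomp Require Import all_boot all_order all_algebra.
Set Implicit Arguments. Unset Strict Implicit. Unset Printing Implicit Defensive.
Import Order.TTheory GRing.Theory Num.Theory.
Local Open Scope ring_scope.

(* Coherence (betting scheme) of a prevision assessment [mu] on a finite
   family, indexed by the elements of [D], of conditional random quantities
   X_i | K_i (values X i w on the constituents w of K i).  For every vector of
   stakes s, the random gain G = sum_i s_i K_i (X_i - mu_i), restricted to the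
   disjunction of the conditioning events of the quantities actually bet on,
   must have min <= 0 <= max.  (Quantifying over the support of s is the same
   as quantifying over all subfamilies.)  Conditioning events are nonempty. *)
Definition coherent (R : realFieldType) (I T : finType) (D : {set I})
  (X : I -> T -> R) (K : I -> {set T}) (mu : I -> R) : Prop :=
  (forall i, i \in D -> K i != set0) /\
  forall s : I -> R,
    let Hs := \bigcup_(i in D | s i != 0) K i in
    let G := fun w => \sum_(i in D) s i * ((w \in K i)%:R * (X i w - mu i)) in
    Hs != set0 ->
    (exists2 w, w \in Hs & G w <= 0) /\ (exists2 w, w \in Hs & 0 <= G w).

(* Three conditional events E i | H i, i : 'I_3 (index 0,1,2 = paper's 1,2,3).
   p S is the prevision of the conjunction C_S of the conditional events in S
   (for S = [set i], p S = P(E i | H i)). *)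
Definition conjv (R : nzRingType) (T : finType) (E H : 'I_3 -> {set T})
  (p : {set 'I_3} -> R) (S : {set 'I_3}) (w : T) : R :=
  if [exists i in S, (w \in H i) && (w \notin E i)] then 0
  else if [set i in S | w \notin H i] == set0 then 1
  else p [set i in S | w \notin H i].

Definition conjcond (T : finType) (H : 'I_3 -> {set T}) (S : {set 'I_3}) : {set T} :=
  \bigcup_(i in S) H i.

Definition F12 : {set 'I_3} := [set i | i != ord_max].

Definition ce_coherent (R : realFieldType) (T : finType) (E H : 'I_3 -> {set T})
  (F : {set 'I_3}) (p : {set 'I_3} -> R) : Prop :=
  coherent [set [set i] | i in F] (conjv E H p) (conjcond H) p.

Definition p_consistent (R : realFieldType) (T : finType) (E H : 'I_3 -> {set T})
  (F : {set 'I_3}) : Prop :=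
  ce_coherent E H F (fun _ => 1 : R).

Definition p_entails (R : realFieldType) (T : finType) (E H : 'I_3 -> {set T})
  (F : {set 'I_3}) (j : 'I_3) : Prop :=
  p_consistent R E H F /\
  forall p : {set 'I_3} -> R, ce_coherent E H (j |: F) p ->
    (forall i, i \in F -> p [set i] = 1) -> p [set j] = 1.

(* Full assessment for the iterated conditional (E3|H3)|((E1|H1)/\(E2|H2)):
   a (Some S) = prevision of the conjunction C_S (S nonempty),
   a None     = mu = prevision of the iterated conditional. *)
Definition iterv (R : nzRingType) (T : finType) (E H : 'I_3 -> {set T})
  (a : option {set 'I_3} -> R) (w : T) : R :=
  conjv E H (fun S => a (Some S)) setT w
  + a None * (1 - conjv E H (fun S => a (Some S)) F12 w).

Definition itfam_val (R : nzRingType) (T : finType) (E H : 'I_3 -> {set T})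
  (a : option {set 'I_3} -> R) (o : option {set 'I_3}) (w : T) : R :=
  match o with
  | Some S0 => conjv E H (fun S => a (Some S)) S0 w
  | None => iterv E H a w
  end.

(* conditioning events; the bet on the iterated conditional is called off
   where the conditioning conjunction C12 has value 0 (there the iterated
   conditional is equal to its prevision mu). *)
Definition itfam_cond (R : nzRingType) (T : finType) (E H : 'I_3 -> {set T})
  (a : option {set 'I_3} -> R) (o : option {set 'I_3}) : {set T} :=
  match o with
  | Some S0 => conjcond H S0
  | None => [set w in conjcond H setT | conjv E H (fun S => a (Some S)) F12 w != 0]
  end.

Definition itfam_dom : {set option {set 'I_3}} :=
  [set o | if o is Some S0 then S0 != set0 else true].

(* (E3|H3) | ((E1|H1) /\ (E2|H2)) = 1 : for every coherent assessment of the
   family of all conjunctions and of the iterated conditional, the iterated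
   conditional is constantly equal to 1. *)
Definition iterated_is_one (R : realFieldType) (T : finType) (E H : 'I_3 -> {set T}) : Prop :=
  forall a : option {set 'I_3} -> R,
    coherent itfam_dom (itfam_val E H a) (itfam_cond E H a) a ->
    forall w, iterv E H a w = 1.

(* Main.v *)
Require Import Defs.
From HB Require Import structures.
From mathcomp Require Import all_boot all_order all_algebra.
From mathcomp Require Import ring lra.
Set Implicit Arguments. Unset Strict Implicit. Unset Printing Implicit Defensive.
Import Order.TTheory GRing.Theory Num.Theory.
Local Open Scope ring_scope.

Section Coh.
Variables (R : realFieldType) (I T : finType) (D : {set I}) (X : I -> T -> R)
  (K : I -> {set T}) (mu : I -> R).

Definition gain (s : I -> R) w :=
  \sum_(i in D) s i * ((w \in K i)%:R * (X i w - mu i)).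
Definition inHs (s : I -> R) w := exists2 i, (i \in D) && (s i != 0) & w \in K i.

Lemma coh_wit s : coherent D X K mu -> (exists2 j, j \in D & s j != 0) ->
  (exists2 w, inHs s w & gain s w <= 0) /\ (exists2 w, inHs s w & 0 <= gain s w).
Proof.
move=> [hK hc] [j jD sj].
have := hc s; cbv zeta.
case.
  have /set0Pn [w wK] := hK j jD; apply/set0Pn; exists w.
  by apply/bigcupP; exists j => //; rewrite jD sj.
move=> [w1 /bigcupP [i1 h1 k1] g1] [w2 /bigcupP [i2 h2 k2] g2].
by split; [exists w1 => //; exists i1 | exists w2 => //; exists i2].
Qed.

Lemma coh_const s c : coherent D X K mu -> (exists2 j, j \in D & s j != 0) ->
  (forall w, inHs s w -> gain s w = c) -> c = 0.
Proof.
move=> hc hj hg; have [[w1 h1 g1] [w2 h2 g2]] := coh_wit hc hj.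
rewrite hg // in g1; rewrite hg // in g2.
by apply/le_anti; rewrite g1 g2.
Qed.

Lemma coh_pos s : coherent D X K mu -> (exists2 j, j \in D & s j != 0) ->
  (forall w, inHs s w -> 0 < gain s w) -> False.
Proof.
move=> hc hj hg; have [[w1 h1 g1] _] := coh_wit hc hj.
by have := hg w1 h1; rewrite ltNge g1.
Qed.

Lemma coh_neg s : coherent D X K mu -> (exists2 j, j \in D & s j != 0) ->
  (forall w, inHs s w -> gain s w < 0) -> False.
Proof.
move=> hc hj hg; have [_ [w1 h1 g1]] := coh_wit hc hj.
by have := hg w1 h1; rewrite ltNge g1.
Qed.

Lemma coh_suff : (forall i, i \in D -> K i != set0) ->
  (forall s, (exists2 j, j \in D & s j != 0) ->
     exists2 w, inHs s w & forall i, i \in D -> s i != 0 -> w \in K i -> X i w = mu i) ->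
  coherent D X K mu.
Proof.
move=> hK hw; split => // s; cbv zeta => /set0Pn [w0 /bigcupP [j /andP [jD sj] _]].
have [w [i /andP [iD si] wi] hx] := hw s (ex_intro2 _ _ j jD sj).
have g0 : \sum_(i in D) s i * ((w \in K i)%:R * (X i w - mu i)) = 0.
  apply: big1 => k kD; have [->|sk] := eqVneq (s k) 0; first by rewrite mul0r.
  case wk: (w \in K k); last by rewrite mul0r mulr0.
  by rewrite hx // subrr !mulr0.
have wH : w \in \bigcup_(i in D | s i != 0) K i by apply/bigcupP; exists i => //; rewrite iD.
by split; exists w => //; rewrite g0.
Qed.

Lemma sum2 (f : I -> R) j1 j2 c1 c2 : j1 != j2 -> j1 \in D -> j2 \in D ->
  \sum_(i in D) (if i == j1 then c1 else if i == j2 then c2 else 0) * f i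
  = c1 * f j1 + c2 * f j2.
Proof.
move=> ne j1D j2D; rewrite (bigD1 j1) //= eqxx (bigD1 j2) /=; last by rewrite j2D eq_sym.
rewrite eq_sym (negbTE ne) eqxx addrA big1 ?addr0 // => i /andP [/andP [_ /negbTE ->] /negbTE ->].
by rewrite mul0r.
Qed.

Lemma sum1 (f : I -> R) j1 c1 : j1 \in D ->
  \sum_(i in D) (if i == j1 then c1 else 0) * f i = c1 * f j1.
Proof.
move=> j1D; rewrite (bigD1 j1) //= eqxx big1 ?addr0 // => i /andP [_ /negbTE ->].
by rewrite mul0r.
Qed.

End Coh.
Section Main.
Variables (R : realFieldType) (T : finType) (E H : 'I_3 -> {set T}).
Hypothesis hH : forall i, H i != set0.

Local Notation om := (@ord_max 2).

Definition Fb i w := (w \in H i) && (w \notin E i).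
Definition Vb i w := (w \in H i) && (w \in E i).

Definition gW (A : {set 'I_3}) w :=
  [&& [exists i in A, w \in H i],
      [forall i in A, (i != om) ==> ~~ Fb i w] &
      ((om \in A) ==> ~~ Vb om w)].

Definition good i w := if i == om then Vb i w else ~~ Fb i w.
Definition p0 (S : {set 'I_3}) : R := if om \in S then 0 else 1.

Lemma setT_F12 : om |: F12 = setT.
Proof. by apply/setP => i; rewrite !inE; case: eqP. Qed.

Lemma inF12 i : (i \in F12) = (i != om).
Proof. by rewrite inE. Qed.

Lemma conjv_p0 S w :
  conjv E H p0 S w = if [forall i in S, good i w] then 1 else 0.
Proof.
rewrite /conjv; case: existsP => [[i /andP [iS /andP [hi ei]]]|hF].
  rewrite ifF //; apply/negP => /forall_inP /(_ i iS).
  by rewrite /good /Vb /Fb hi (negbTE ei); case: eqP.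
have nF : forall i, i \in S -> (w \in H i) -> w \in E i.
  by move=> i iS hi; apply/negPn/negP => ei; apply: hF; exists i; rewrite iS hi.
have -> : [forall i in S, good i w] = (om \in S) ==> (w \in H om).
  apply/forall_inP/implyP => [h oS | h i iS].
    by have := h _ oS; rewrite /good eqxx /Vb => /andP [].
  rewrite /good /Vb /Fb; case: eqP => [ei|_].
    by rewrite ei in iS *; have ho := h iS; rewrite ho nF.
  by apply/negP => /andP [hi /negP]; apply; apply: nF.
case: ifP => [/eqP hU|hU].
  have hT : (om \in S) ==> (w \in H om).
    apply/implyP => oS; apply/negPn/negP => ho.
    have : om \in [set i in S | w \notin H i] by rewrite inE oS ho.
    by rewrite hU inE.
  by rewrite hT.
rewrite /p0 inE; case: (om \in S); case: (w \in H om) => //.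
Qed.

Lemma conjcond1 i : conjcond H [set i] = H i.
Proof. by rewrite /conjcond big_set1. Qed.

Lemma conjv_single (p : {set 'I_3} -> R) i w : w \in H i ->
  conjv E H p [set i] w = if w \in E i then 1 else 0.
Proof.
move=> hi; rewrite /conjv.
case: existsP => [[j /andP [/set1P -> /andP [_ /negbTE ->]]] //|hF].
have ei : w \in E i by apply/negPn/negP => ei; apply: hF; exists i; rewrite set11 hi.
rewrite ei ifT //; apply/eqP/setP => j; rewrite !inE.
by case: eqP => // ->; rewrite hi.
Qed.

Lemma imset1P (A : {set 'I_3}) S : S \in [set [set i] | i in A] -> exists2 i, i \in A & S = [set i].
Proof. by move/imsetP. Qed.

Lemma pc_wit (A : {set 'I_3}) : p_consistent R E H F12 -> A \subset F12 -> A != set0 ->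
  exists w, gW A w.
Proof.
move=> hc sA /set0Pn [i0 iA].
pose s := fun S : {set 'I_3} => if S \in [set [set i] | i in A] then -1 else 0 : R.
have hj : exists2 j, j \in [set [set i] | i in F12] & s j != 0.
  exists [set i0]; first by apply: imset_f; apply: (subsetP sA).
  by rewrite /s imset_f // oppr_eq0 oner_eq0.
have [[w hw g] _] := coh_wit hc hj.
case: hw => S /andP [SD sS] wS.
have : S \in [set [set i] | i in A] by move: sS; rewrite /s; case: ifP => //; rewrite eqxx.
case/imset1P => i iA' eS; rewrite eS conjcond1 in wS.
exists w; apply/and3P; split.
- by apply/existsP; exists i; rewrite iA' wS.
- apply/forall_inP => k kA; apply/implyP => _; apply/negP => Fk.
  move: g; apply/negP; rewrite -ltNge /gain.
  have k1 : [set k] \in [set [set i] | i in F12] by apply: imset_f; apply: (subsetP sA).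
  rewrite (bigD1 [set k]) //=.
  rewrite /s imset_f // conjcond1; case/andP: Fk => hk /negbTE ek.
  rewrite hk conjv_single // ek.
  apply: (@lt_le_trans _ _ 1); first by rewrite ltr01.
  rewrite [X in X + _](_ : _ = 1); last by rewrite /= mul1r sub0r mulN1r opprK.
  rewrite lerDl; apply: sumr_ge0 => S' /andP [/imset1P [m _ ->] _].
  rewrite conjcond1; case hm: (w \in H m); last by rewrite mul0r mulr0.
  rewrite conjv_single //; case: (w \in E m); case: ifP => _; rewrite ?mul1r ?mul0r; lra.
- apply/implyP => oA; have := subsetP sA _ oA; by rewrite inF12 eqxx.
Qed.
Lemma setT0 : [set: 'I_3] != set0.
Proof. by apply/set0Pn; exists ord0. Qed.

Definition NEC := forall A : {set 'I_3}, A != set0 -> exists w, gW A w.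

Lemma good_sub (A S : {set 'I_3}) w : gW A w -> S \subset A ->
  [forall i in S, good i w] = (om \notin S).
Proof.
move=> /and3P [_ /forall_inP hF /implyP hV] sSA.
case oS: (om \in S) => /=.
  apply/negbTE/negP => /forall_inP /(_ _ oS); rewrite /good eqxx.
  by apply/negP/hV/(subsetP sSA).
apply/forall_inP => i iS; rewrite /good; case: eqP => [ei|_].
  by rewrite ei oS in iS.
have := hF _ (subsetP sSA _ iS); case: eqP => // ei _; by rewrite ei oS in iS.
Qed.

Lemma ce_p0 : NEC -> ce_coherent E H (om |: F12) p0.
Proof.
move=> hN; rewrite /ce_coherent setT_F12; apply: coh_suff.
  by move=> S /imset1P [i _ ->]; rewrite conjcond1.
move=> s [j /imset1P [i0 _ ->] sj].
pose A := [set i | s [set i] != 0].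
have nA : A != set0 by apply/set0Pn; exists i0; rewrite inE.
have [w hw] := hN A nA.
have := hw => /and3P [/exists_inP [i iA wi] _ _].
exists w.
  exists [set i]; last by rewrite conjcond1.
  by rewrite imset_f ?in_setT //; rewrite inE in iA.
move=> S /imset1P [k _ ->] sk; rewrite conjcond1 => wk.
rewrite conjv_p0 (good_sub hw) ?sub1set ?inE //.
by rewrite /p0 in_set1 eq_sym; case: eqP.
Qed.

Lemma not_pent : NEC -> ~ p_entails R E H F12 om.
Proof.
move=> hN [_ h].
have h1 : p0 [set om] = 1.
  apply: h (ce_p0 hN) _ => i; rewrite inF12 /p0 in_set1 eq_sym => /negbTE ->.
  by [].
by move: h1; rewrite /p0 set11 => /eqP; rewrite eq_sym oner_eq0.
Qed.

Definition a0 (o : option {set 'I_3}) : R := if o is Some Z then p0 Z else 0.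

Lemma a0E : (fun S => a0 (Some S)) = p0. Proof. by []. Qed.

Lemma it_a0 : NEC -> coherent itfam_dom (itfam_val E H a0) (itfam_cond E H a0) a0.
Proof.
move=> hN; apply: coh_suff.
  case=> [Z|] /=; rewrite ?inE.
    move=> /set0Pn [i iS]; have /set0Pn [w wi] := hH i; apply/set0Pn; exists w.
    by apply/bigcupP; exists i.
  move=> _; have [w hw] := hN setT (setT0).
  have := hw => /and3P [/exists_inP [i _ wi] _ _].
  apply/set0Pn; exists w; rewrite inE a0E conjv_p0 (good_sub hw (subsetT _)).
  by rewrite inF12 eqxx oner_eq0 andbT; apply/bigcupP; exists i.
move=> s [j jD sj].
pose A := if s None != 0 then setT
          else [set i | [exists Z, (Z != set0) && (s (Some Z) != 0) && (i \in Z)]].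
have hA : forall Z, Z != set0 -> s (Some Z) != 0 -> Z \subset A.
  move=> Z nS sS; rewrite /A; case: ifP => _; first exact: subsetT.
  by apply/subsetP => i iS; rewrite inE; apply/existsP; exists Z; rewrite nS sS iS.
have nA : A != set0.
  rewrite /A; case: ifP => sN; first exact: setT0.
  case: j jD sj => [Z|]; last by rewrite sN.
  rewrite inE => nS sS; have /set0Pn [i iS] := nS.
  by apply/set0Pn; exists i; rewrite inE; apply/existsP; exists Z; rewrite nS sS iS.
have [w hw] := hN A nA.
have := hw => /and3P [/exists_inP [i iA wi] _ _].
exists w.
  case sN: (s None != 0).
    exists None; first by rewrite inE sN.
    rewrite /= inE a0E conjv_p0 (good_sub hw); last by rewrite /A sN subsetT.
    by rewrite inF12 eqxx oner_eq0 andbT; apply/bigcupP; exists i.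
  move: iA; rewrite /A sN inE => /existsP [Z /andP [/andP [nS sS] iS]].
  exists (Some Z); first by rewrite inE nS.
  by apply/bigcupP; exists i.
case=> [Z|] /=; rewrite ?inE => nS sS _.
  by rewrite a0E conjv_p0 (good_sub hw (hA _ nS sS)) /p0; case: (om \in Z).
rewrite /iterv a0E conjv_p0 (good_sub hw); last by rewrite /A sS subsetT.
by rewrite in_setT /= mul0r addr0.
Qed.

Lemma not_iter : NEC -> ~ iterated_is_one R E H.
Proof.
move=> hN h; have [w hw] := hN setT (setT0).
have := h a0 (it_a0 hN) w.
rewrite /iterv a0E conjv_p0 (good_sub hw (subsetT _)) in_setT /= mul0r addr0.
by move/eqP; rewrite eq_sym oner_eq0.
Qed.
Definition EC (A : {set 'I_3}) := forall w, [exists i in A, w \in H i] ->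
  [exists i in A, (i != om) && Fb i w] || Vb om w.

Lemma pent_EC (A : {set 'I_3}) : om \in A -> EC A -> p_consistent R E H F12 ->
  p_entails R E H F12 om.
Proof.
move=> oA hE hpc; split => // p hp h1.
rewrite /ce_coherent setT_F12 in hp.
set D := [set [set i] | i in [set: 'I_3]] in hp.
have Dk : forall k, [set k] \in D by move=> k; apply: imset_f; rewrite in_setT.
have tb : forall k w, w \in H k -> conjv E H p [set k] w = 0 \/ conjv E H p [set k] w = 1.
  by move=> k w hk; rewrite conjv_single //; case: (w \in E k); [right|left].
set p3 := p [set om].
have le1 : p3 <= 1.
  rewrite leNgt; apply/negP => lt1.
  pose s := fun Z : {set 'I_3} => if Z == [set om] then 1 else 0 : R.
  apply: (@coh_neg _ _ _ _ _ _ _ s hp).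
    by exists [set om]; rewrite ?Dk // /s eqxx oner_eq0.
  move=> w [Z /andP [_ sS] wS].
  have eS : Z = [set om].
    by apply/eqP; move: sS; rewrite /s /=; case: (Z == [set om]) => //; rewrite eqxx.
  rewrite /gain /s sum1 // mul1r conjcond1.
  rewrite eS conjcond1 in wS; rewrite wS mul1r.
  by case: (tb _ _ wS) => ->; rewrite -/p3; lra.
rewrite -/p3; apply/eqP; rewrite eq_le le1 /= leNgt; apply/negP => lt1.
pose s := fun Z : {set 'I_3} => if Z == [set om] then 1
  else if Z \in [set [set i] | i in A :\ om] then -1 else 0 : R.
apply: (@coh_pos _ _ _ _ _ _ _ s hp).
  by exists [set om]; rewrite ?Dk // /s eqxx oner_eq0.
move=> w hw.
have hex : [exists i in A, w \in H i].
  case: hw => Z /andP [_ sS] wS; move: sS; rewrite /s /=.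
  case: ifP => [/eqP eZ _|_].
    by rewrite eZ conjcond1 in wS; apply/exists_inP; exists om.
  case: ifP => [/imset1P [i]|]; last by rewrite eqxx.
  rewrite inE => /andP [_ iA] eZ _.
  by rewrite eZ conjcond1 in wS; apply/exists_inP; exists i.
rewrite /gain (bigD1 [set om]) //= /s eqxx mul1r conjcond1 -/p3.
set rest := \sum_(i | _) _.
have tom : - 1 < (w \in H om)%:R * (conjv E H p [set om] w - p3).
  case hw': (w \in H om); last by rewrite mul0r; lra.
  by rewrite mul1r; case: (tb _ _ hw') => ->; lra.
have term : forall Z, Z \in D -> Z != [set om] ->
  0 <= (if Z == [set om] then 1 else if Z \in [set [set i] | i in A :\ om] then -1 else 0)
    * ((w \in conjcond H Z)%:R * (conjv E H p Z w - p Z)).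
  move=> Z /imset1P [m _ ->] ne; rewrite (negbTE ne).
  have pm : p [set m] = 1.
    apply: h1; rewrite inF12; apply/eqP => em; by rewrite em eqxx in ne.
  rewrite conjcond1 pm; case hm: (w \in H m); last by rewrite mul0r !mulr0.
  rewrite mul1r; case: ifP => _; case: (tb _ _ hm) => ->; lra.
have rest0 : 0 <= rest by apply: sumr_ge0 => Z /andP [SD ne]; apply: term.
case/orP: (hE w hex) => [/exists_inP [i iA /andP [io Fi]] | /andP [ho eo]].
  have rest1 : 1 <= rest.
    rewrite /rest (bigD1 [set i]) /=; last first.
      by rewrite Dk /=; apply/negP => /eqP /set1_inj ei; rewrite ei eqxx in io.
    have -> : ([set i] == [set om]) = false.
      by apply/negP => /eqP /set1_inj ei; rewrite ei eqxx in io.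
    rewrite imset_f ?inE ?io // conjcond1.
    case/andP: Fi => hi ei; rewrite hi conjv_single // (negbTE ei) h1 ?inF12 //.
    set r2 := \sum_(i0 | _) _.
    have : 0 <= r2.
      apply: sumr_ge0 => Z /andP [/andP [SD ne] _]; exact: term.
    rewrite /=; lra.
  lra.
rewrite ho conjv_single // eo mul1r; lra.
Qed.
Lemma condU S w : w \in conjcond H S -> [set i in S | w \notin H i] \proper S.
Proof.
move=> /bigcupP [i iS wi]; apply/properP; split.
  by apply/subsetP => k; rewrite inE => /andP [].
by exists i => //; rewrite inE wi andbF.
Qed.

Lemma conjcondU1 V w : (w \in conjcond H (om |: V)) = (w \in H om) || (w \in conjcond H V).
Proof.
apply/bigcupP/orP => [[i]|[wo|/bigcupP [i iV wi]]].
- by rewrite !inE => /orP [/eqP -> ->|iV wi]; [left|right; apply/bigcupP; exists i].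
- by exists om; rewrite ?setU11.
- by exists i; rewrite // inE iV orbT.
Qed.

Section Iter.
Variable a : option {set 'I_3} -> R.
Hypothesis hco : coherent itfam_dom (itfam_val E H a) (itfam_cond E H a) a.
Variable A : {set 'I_3}.
Hypothesis oA : om \in A.
Hypothesis hE : EC A.

Local Notation z := (fun S0 => a (Some S0)).
Definition z' (U : {set 'I_3}) := if U == set0 then 1 else a (Some U).
Definition AsubV (V : {set 'I_3}) := forall i, i \in A -> i != om -> i \in V.

Lemma z_ge0 S : S != set0 -> 0 <= a (Some S).
Proof.
have key : forall n (Y : {set 'I_3}), (#|Y| <= n)%N -> Y != set0 -> 0 <= a (Some Y).
  elim=> [|n IH] Z hZ nZ.
    by move: nZ; rewrite -card_gt0; move: hZ; case: #|Z|.
  rewrite leNgt; apply/negP => lt0.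
  pose s := fun o => if o == Some Z then 1 else 0 : R.
  apply: (@coh_pos _ _ _ _ _ _ _ s hco).
    by exists (Some Z); rewrite ?inE // /s eqxx oner_eq0.
  move=> w [o /andP [oD so] wo].
  have eo : o = Some Z by apply/eqP; move: so; rewrite /s; case: (o == Some Z) => //; rewrite eqxx.
  rewrite eo /= in wo.
  rewrite /gain /s sum1 ?inE // mul1r /= wo mul1r.
  have : 0 <= conjv E H z Z w.
    rewrite /conjv; case: ifP => _; first by [].
    case: ifP => [_|/negbT nU]; first exact: ler01.
    apply: IH nU; have := proper_card (condU wo) => h.
    by rewrite -ltnS; apply: leq_trans hZ.
  lra.
by move=> nS; apply: (key #|S|).
Qed.

Lemma conjv_ge0 S w : 0 <= conjv E H z S w.
Proof.
rewrite /conjv; case: ifP => _; first by [].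
by case: ifP => [_|/negbT nU]; [exact: ler01 | exact: z_ge0].
Qed.

Lemma pw (V : {set 'I_3}) (w : T) : om \notin V -> AsubV V ->
  (w \notin H om -> AsubV [set i in V | w \notin H i] ->
     a (Some (om |: [set i in V | w \notin H i])) = z' [set i in V | w \notin H i]) ->
  conjv E H z (om |: V) w = conjv E H z V w.
Proof.
move=> oV hV hz; rewrite /conjv.
have eF : [exists i in om |: V, (w \in H i) && (w \notin E i)] =
          [exists i in V, (w \in H i) && (w \notin E i)].
  apply/exists_inP/exists_inP => [[i]|[i iV hF]]; last by exists i; rewrite // inE iV orbT.
  rewrite !inE => /orP [/eqP ->|iV] hF; last by exists i.
  have hex : [exists i in A, w \in H i] by apply/exists_inP; exists om => //; case/andP: hF.
  case/orP: (hE hex) => [/exists_inP [j jA /andP [jo Fj]]|/andP [_ eo]].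
    by exists j => //; apply: hV.
  by case/andP: hF => _; rewrite eo.
rewrite eF; case: ifP => // nF.
case hO: (w \in H om).
  have -> : [set i in om |: V | w \notin H i] = [set i in V | w \notin H i].
    by apply/setP => i; rewrite !inE; case: eqP => [->|_] //; rewrite hO !andbF.
  by [].
have -> : [set i in om |: V | w \notin H i] = om |: [set i in V | w \notin H i].
  by apply/setP => i; rewrite !inE; case: eqP => [->|_] //; rewrite hO.
have -> : (om |: [set i in V | w \notin H i] == set0) = false.
  by apply/negbTE/set0Pn; exists om; rewrite setU11.
rewrite hz ?hO //.
move=> i iA io; rewrite inE (hV _ iA io) /=; apply/negP => wi.
have hex : [exists i in A, w \in H i] by apply/exists_inP; exists i.
case/orP: (hE hex) => [/exists_inP [j jA /andP [jo Fj]]|/andP [wo _]].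
  by move/negbT: nF => /negP; apply; apply/exists_inP; exists j => //; apply: hV.
by rewrite wo in hO.
Qed.

Lemma zstep (V : {set 'I_3}) :
  (forall U : {set 'I_3}, U \proper V -> om \notin U -> AsubV U -> a (Some (om |: U)) = z' U) ->
  om \notin V -> AsubV V -> a (Some (om |: V)) = z' V.
Proof.
move=> IH oV sV.
have fi : forall w, w \in conjcond H V -> conjv E H z (om |: V) w = conjv E H z V w.
  move=> w wV; apply: pw => // _ sU; apply: IH => //; first exact: condU.
  by rewrite inE (negbTE oV).
have fii : forall w, w \in H om -> w \notin conjcond H V -> conjv E H z (om |: V) w = z' V.
  move=> w wo wV; rewrite /conjv.
  have nF : [exists i in om |: V, (w \in H i) && (w \notin E i)] = false.
    apply/negbTE/exists_inP => [[i]]; rewrite !inE => /orP [/eqP ->|iV] /andP [hi ei].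
      have hex : [exists i in A, w \in H i] by apply/exists_inP; exists om.
      case/orP: (hE hex) => [/exists_inP [j jA /andP [jo /andP [hj _]]]|/andP [_ eo]].
        by move/negP: wV; apply; apply/bigcupP; exists j => //; apply: sV.
      by rewrite eo in ei.
    by move/negP: wV; apply; apply/bigcupP; exists i.
  rewrite nF.
  have -> : [set i in om |: V | w \notin H i] = V.
    apply/setP => i; rewrite !inE; case: eqP => [->|_]; first by rewrite wo (negbTE oV).
    case iV: (i \in V) => //=; apply/negP => wi; move/negP: wV; apply; apply/bigcupP; by exists i.
  by rewrite /z'.
pose s := fun o => if o == Some (om |: V) then 1 else if o == Some V then -1 else 0 : R.
have D1 : Some (om |: V) \in itfam_dom by rewrite inE; apply/set0Pn; exists om; rewrite setU11.
suff: z' V - a (Some (om |: V)) = 0 by move/eqP; rewrite subr_eq0 => /eqP.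
apply: (@coh_const _ _ _ _ _ _ _ s _ hco).
  by exists (Some (om |: V)); rewrite // /s eqxx oner_eq0.
move=> w [o /andP [oD so] wo].
have wU : w \in conjcond H (om |: V).
  move: so; rewrite /s; case: ifP => [/eqP eo _|_]; first by rewrite eo in wo.
  case: ifP => [/eqP eo _|_]; last by rewrite eqxx.
  by rewrite eo /= in wo; rewrite conjcondU1 wo orbT.
rewrite /gain.
case V0: (V == set0).
  rewrite (bigD1 (Some (om |: V))) //= big1 ?addr0; last first.
    move=> o' /andP [o'D ne]; rewrite /s (negbTE ne).
    case: ifP => [/eqP eo|_]; last by rewrite mul0r.
    by move: o'D; rewrite eo inE V0.
  rewrite /s eqxx mul1r wU mul1r.
  move/eqP: V0 => V0.
  have wV : w \notin conjcond H V by rewrite V0 /conjcond big_set0 inE.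
  have wo' : w \in H om by move: wU; rewrite conjcondU1 (negbTE wV) orbF.
  by rewrite fii.
have D2 : Some V \in itfam_dom by rewrite inE V0.
have ne : Some (om |: V) != Some V.
  apply/eqP => [[h]]; have : om \in V by rewrite -h setU11.
  by rewrite (negbTE oV).
rewrite /s sum2 //= wU.
have t1 : (true%:R : R) = 1 by [].
have f0 : (false%:R : R) = 0 by [].
case wV: (w \in conjcond H V).
  rewrite fi // /z' V0 t1 !mul1r; lra.
have wo' : w \in H om by move: wU; rewrite conjcondU1 wV orbF.
by rewrite t1 f0 mul0r mulr0 addr0 !mul1r fii // wV.
Qed.

Lemma zid (V : {set 'I_3}) : om \notin V -> AsubV V -> a (Some (om |: V)) = z' V.
Proof.
have key : forall n (V : {set 'I_3}), (#|V| <= n)%N -> om \notin V -> AsubV V ->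
    a (Some (om |: V)) = z' V.
  elim=> [|n IH] Y hY; apply: zstep => U pU.
    by have := proper_card pU; rewrite leqn0 in hY; rewrite (eqP hY) ltn0.
  apply: IH; have := proper_card pU => h; by rewrite -ltnS; apply: leq_trans hY.
exact: key.
Qed.

Lemma C123 w : conjv E H z setT w = conjv E H z F12 w.
Proof.
rewrite -setT_F12; apply: pw; first by rewrite inF12 eqxx.
  by move=> i _; rewrite inF12.
move=> _ sU; apply: zid => //; by rewrite !inE eqxx.
Qed.

Lemma iterv_eq w : iterv E H a w = conjv E H z F12 w + a None * (1 - conjv E H z F12 w).
Proof.
apply: (@eq_trans _ _ (conjv E H z setT w + a None * (1 - conjv E H z F12 w))); first by [].
by rewrite C123.
Qed.

Lemma mu1 : a None = 1.
Proof.
pose s := fun o : option {set 'I_3} => if o == None then 1 else 0 : R.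
have hj : exists2 j, j \in itfam_dom & s j != 0 by exists None; rewrite ?inE // /s eqxx oner_eq0.
have gE : forall w, inHs itfam_dom (itfam_cond E H a) s w ->
    gain itfam_dom (itfam_val E H a) (itfam_cond E H a) a s w
    = conjv E H z F12 w * (1 - a None) /\ 0 < conjv E H z F12 w.
  move=> w [o /andP [oD so] wo].
  have eo : o = None by apply/eqP; move: so; rewrite /s; case: (o == None) => //; rewrite eqxx.
  rewrite eo in wo; have wo' := wo; move: wo'; rewrite /= inE => /andP [_ nz].
  have Nd : None \in itfam_dom by rewrite inE.
  rewrite /gain /s sum1 // mul1r wo mul1r /= iterv_eq.
  split; first by ring.
  by rewrite lt_def nz conjv_ge0.
case: (ltgtP (a None) 1) => [lt|gt|//].
  exfalso; apply: (@coh_pos _ _ _ _ _ _ _ s hco hj) => w hw.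
  have [-> pos] := gE w hw; by apply: mulr_gt0; rewrite // subr_gt0.
exfalso; apply: (@coh_neg _ _ _ _ _ _ _ s hco hj) => w hw.
have [-> pos] := gE w hw; by rewrite pmulr_rlt0 // subr_lt0.
Qed.

Lemma iter1 w : iterv E H a w = 1.
Proof. by rewrite iterv_eq mu1; ring. Qed.

End Iter.
Lemma iter_EC (A : {set 'I_3}) : om \in A -> EC A -> iterated_is_one R E H.
Proof. move=> oA hE a hco w. exact: (iter1 hco oA hE w). Qed.

Lemma main_iff : p_consistent R E H F12 ->
  (p_entails R E H F12 om <-> iterated_is_one R E H).
Proof.
move=> hpc.
case: (boolP [forall A : {set 'I_3}, (A != set0) ==> [exists w, gW A w]]) => hN.
  have NEC' : NEC.
    move=> A nA; move/forallP: hN => /(_ A) /implyP /(_ nA) /existsP [w hw].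
    by exists w.
  split => h; exfalso; [exact: (not_pent NEC' h) | exact: (not_iter NEC' h)].
move/forallPn: hN => [A]; rewrite negb_imply => /andP [nA /existsPn nw].
have oA : om \in A.
  apply/negPn/negP => oA.
  have sA : A \subset F12.
    by apply/subsetP => i iA; rewrite inF12; apply/eqP => e; rewrite -e iA in oA.
  have [w hw] := pc_wit hpc sA nA.
  by move: (nw w); rewrite hw.
have hE : EC A.
  move=> w hex; move: (nw w); rewrite /gW hex /= => /nandP [/forall_inPn [i iA]|].
    rewrite negb_imply negbK => /andP [io Fi].
    by apply/orP; left; apply/exists_inP; exists i => //; rewrite io.
  by rewrite negb_imply oA negbK /= => ->; rewrite orbT.
split => _; [exact: (iter_EC oA hE) | exact: (pent_EC oA hE hpc)].
Qed.
End Main.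

Unset Implicit Arguments.

Theorem mainTheorem7 (R : realFieldType) (T : finType) (E H : 'I_3 -> {set T}) :
  (forall i, H i != set0) ->
  p_consistent R E H F12 ->
  (p_entails R E H F12 ord_max <-> iterated_is_one R E H).
Proof. by move=> hH hpc; apply: main_iff. Qed.
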